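(* Let $p<q$ be coprime positive integers, $m$ a positive integer, $j\in\{3,4\}$ and $R=\mathbb C[X_0,X_1,X_j]$. Define $\mu:\mathbb Z^3\to\mathbb Z^3$, $\mu(d_0,d_1,d_j)=(d_0-pd_1+qd_j,\;d_1-d_j,\;pd_1-qd_j)$ (injective), $\Lambda=\mu(\mathbb Z_{\ge0}^3)$, and for $\lambda\in\Lambda$ let $f_\lambda=X_0^{d_0}X_1^{d_1}X_j^{d_j}$ where $\mu(d_0,d_1,d_j)=\lambda$. For $(n,c)$ with $(n,c,\omega)\in\Lambda$ for some $\omega$, let $\omega_{(n,c)}=\min\{\omega:(n,c,\omega)\in\Lambda\}$. For $(n,d)\in\mathbb Z\times\mathbb Z/m\mathbb Z$ let $\Lambda_{(n,d)}=\{(n,c,\omega)\in\Lambda: c\equiv d\pmod m\}$ and $c_{(n,d)}=\min\{c\in\mathbb Z:c\equiv d\pmod m,\ (n,c,\omega)\in\Lambda\text{ for some }\omega\}$. Let $\lambda=(n,c,\omega)\in\Lambda_{(n,d)}$. Then: (i) $f_\lambda\in(X_0^{q-p})$ if and only if $\omega>\omega_{(n,c)}$; (ii) if $m=a(q-p)$ for a positive integer $a$, $\omega=\omega_{(n,c)}$ and $c>c_{(n,d)}$, then $f_\lambda\in(X_1^{aq}X_j^{ap})$.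
   Context: Ideals are taken in $R$. The minima $\omega_{(n,c)}$ and $c_{(n,d)}$ exist (the defining sets are nonempty and bounded below). *)

(* Defs.v *)
From mathcomp Require Import all_boot all_algebra.
From mathcomp Require Import Rstruct complex.
From mathcomp Require Import mpoly.
Set Implicit Arguments. Unset Strict Implicit. Unset Printing Implicit Defensive.
Import GRing.Theory Num.Theory.
Local Open Scope ring_scope.

Definition CC : Type := (Rdefinitions.R)[i].

Definition Rpoly : Type := {mpoly CC[3]}.
Definition X0 : Rpoly := 'X_(0 : 'I_3).
Definition X1 : Rpoly := 'X_(1 : 'I_3).
Definition Xj : Rpoly := 'X_(2 : 'I_3).

Definition in_principal_ideal (g f : Rpoly) : Prop := exists h : Rpoly, f = h * g.

Definition mu (p q : int) (d0 d1 dj : int) : int * int * int :=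
  (d0 - p * d1 + q * dj, d1 - dj, p * d1 - q * dj).

Definition inLambda (p q : nat) (l : int * int * int) : Prop :=
  exists d0 d1 dj : nat, mu p%:Z q%:Z d0%:Z d1%:Z dj%:Z = l.

Definition fmon (d0 d1 dj : nat) : Rpoly := X0 ^+ d0 * X1 ^+ d1 * Xj ^+ dj.

Definition is_omega_min (p q : nat) (n c w : int) : Prop :=
  inLambda p q (n, c, w) /\ forall w', inLambda p q (n, c, w') -> w <= w'.

Definition is_c_min (p q m : nat) (n d c0 : int) : Prop :=
  ((c0 == d %[mod m%:Z])%Z /\ exists w, inLambda p q (n, c0, w)) /\
  forall c', (c' == d %[mod m%:Z])%Z -> (exists w, inLambda p q (n, c', w)) -> c0 <= c'.

(* Main.v *)
Require Import Defs.
From mathcomp Require Import all_boot all_algebra.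
From mathcomp Require Import Rstruct complex.
From mathcomp Require Import mpoly.
From mathcomp Require Import zify ring.
Import GRing.Theory Num.Theory.
Local Open Scope ring_scope.

Definition hv (i : 'I_3) : {poly CC} := if i == 0 then 'X else 1.
Definition phi := mmap (@polyC CC) hv.
Lemma phiM (x y : Rpoly) : phi (x * y) = phi x * phi y.
Proof. exact: rmorphM. Qed.
Lemma phiX (x : Rpoly) k : phi (x ^+ k) = phi x ^+ k.
Proof. exact: rmorphXn. Qed.
Lemma phiXi i : phi 'X_i = hv i.
Proof. by rewrite /phi mmapX mmap1U. Qed.
Lemma div_X0 k d0 d1 dj : in_principal_ideal (X0 ^+ k) (fmon d0 d1 dj) -> (k <= d0)%N.
Proof.
case=> h E.
have := congr1 phi E.
rewrite /fmon !phiM !phiX /X0 /X1 /Xj !phiXi /hv /= !expr1n !mulr1 => E2.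
have : ('X^k : {poly CC}) %| 'X^d0 by apply/dvdpP; exists (phi h).
by rewrite dvdp_Pexp2l // size_polyX.
Qed.

Lemma mu_eq (p q d0 d1 dj : nat) n c w :
  mu p%:Z q%:Z d0%:Z d1%:Z dj%:Z = (n, c, w) ->
  [/\ n = d0%:Z - p%:Z * d1%:Z + q%:Z * dj%:Z, c = d1%:Z - dj%:Z & w = p%:Z * d1%:Z - q%:Z * dj%:Z].
Proof. by rewrite /mu => -[<- <- <-]. Qed.
Arguments mu_eq {p q d0 d1 dj n c w}.

Lemma big_d0 (p q d0 d1 dj : nat) n c w :
  (p < q)%N -> mu p%:Z q%:Z d0%:Z d1%:Z dj%:Z = (n, c, w) -> (q - p <= d0)%N ->
  inLambda p q (n, c, w - (q - p)%N%:Z).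
Proof.
move=> pq /mu_eq [-> -> ->] le.
exists (d0 - (q - p))%N, d1.+1, dj.+1; rewrite /mu; congr (_, _, _); lia.
Qed.

Theorem lemma4p19 (p q m : nat) (d : int) (n c w : int) (d0 d1 dj : nat) :
  (0 < p)%N -> (p < q)%N -> coprime p q -> (0 < m)%N ->
  (* lambda = (n,c,w) = mu(d0,d1,dj) lies in Lambda_(n,d) and f_lambda = fmon d0 d1 dj *)
  mu p%:Z q%:Z d0%:Z d1%:Z dj%:Z = (n, c, w) ->
  (c == d %[mod m%:Z])%Z ->
  (* (i) *)
  (forall wmin : int, is_omega_min p q n c wmin ->
     (in_principal_ideal (X0 ^+ (q - p)) (fmon d0 d1 dj) <-> wmin < w)) /\
  (* (ii) *)
  (forall a : nat, (0 < a)%N -> m = (a * (q - p))%N ->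
   forall wmin c0 : int, is_omega_min p q n c wmin -> w = wmin ->
   is_c_min p q m n d c0 -> c0 < c ->
   in_principal_ideal (X1 ^+ (a * q) * Xj ^+ (a * p)) (fmon d0 d1 dj)).
Proof.
move=> p0 pq _ m0 E Hc.
have Hbig := @big_d0 p q d0 d1 dj n c w pq E.
have [En Ec Ew] := mu_eq E.
split.
  move=> wmin [[e0 [e1 [ej /mu_eq [En' Ec' Ew']]]] Hmin]; split.
    move=> /div_X0 le; have := Hmin _ (Hbig le); lia.
  move=> lt.
  have le : (q - p <= d0)%N.
    have h1 : (q%:Z - p%:Z) * (ej%:Z - dj%:Z) = d0%:Z - e0%:Z by lia.
    have h2 : 1 <= ej%:Z - dj%:Z.
      have h3 : (q%:Z - p%:Z) * (ej%:Z - dj%:Z) = w - wmin by lia.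
      have : 0 < (q%:Z - p%:Z) * (ej%:Z - dj%:Z) by lia.
      rewrite pmulr_rgt0; lia.
    have : (q%:Z - p%:Z) * 1 <= (q%:Z - p%:Z) * (ej%:Z - dj%:Z).
      by rewrite ler_pM2l //; lia.
    lia.
  exists (X0 ^+ (d0 - (q - p)) * X1 ^+ d1 * Xj ^+ dj).
  rewrite /fmon -{1}(subnK le) exprD. rewrite -!mulrA; congr (_ * _); rewrite mulrC -!mulrA; congr (_ * _); exact: mulrC.
move=> a a0 Hm wmin c0 Hwm ew Hc0 lt.
have ltd0 : (d0 < q - p)%N.
  rewrite ltnNge; apply/negP => le.
  case: Hwm => _ /(_ _ (Hbig le)); lia.
case: Hc0 => [[Hc0d [w0 [e0 [e1 [ej /mu_eq [En' Ec' Ew']]]]]] _].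
move: Hc Hc0d; rewrite !eqz_mod_dvd => /dvdzP [k1 Hk1] /dvdzP [k2 Hk2].
set t := k1 - k2.
have Ht : c - c0 = t * (a%:Z * (q%:Z - p%:Z)).
  have Hm2 : m%:Z = a%:Z * (q%:Z - p%:Z) by rewrite Hm; lia.
  rewrite /t -Hm2 mulrBl -Hk1 -Hk2; lia.
have t1 : 1 <= t.
  have : 0 < t * (a%:Z * (q%:Z - p%:Z)) by lia.
  rewrite pmulr_lgt0; [lia|]. apply: mulr_gt0; lia.
set u := dj%:Z - ej%:Z - p%:Z * t * a%:Z.
have Hu : (q%:Z - p%:Z) * u = e0%:Z - d0%:Z.
  rewrite /u; lia.
have u0 : 0 <= u.
  case: (ltrP u 0) => [ul|//].
  have : (q%:Z - p%:Z) * u <= (q%:Z - p%:Z) * (-1).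
    by rewrite ler_pM2l; lia.
  lia.
have pta : p%:Z * a%:Z <= p%:Z * t * a%:Z.
  rewrite -mulrA ler_pM2l; last lia.
  have : a%:Z * 1 <= a%:Z * t by rewrite ler_pM2l; lia.
  lia.
have qta : q%:Z * a%:Z <= q%:Z * t * a%:Z.
  rewrite -mulrA ler_pM2l; last lia.
  have : a%:Z * 1 <= a%:Z * t by rewrite ler_pM2l; lia.
  lia.
have le1 : (a * q <= d1)%N.
  have : d1%:Z = e1%:Z + q%:Z * t * a%:Z + u.
    rewrite /u; move: Ht; lia.
  lia.
have le2 : (a * p <= dj)%N.
  have : dj%:Z = ej%:Z + p%:Z * t * a%:Z + u by rewrite /u; lia.
  lia.
exists (X0 ^+ d0 * X1 ^+ (d1 - a * q) * Xj ^+ (dj - a * p)).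
rewrite /fmon -{1}(subnK le1) -{1}(subnK le2) !exprD; ring.
Qed.
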